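(* Let $G=A(n,\theta)$ with $n\ge3$ odd. For each $x\in G\setminus Z(G)$, the subgroup $[x,G]=\langle x^{-1}g^{-1}xg : g\in G\rangle$ is a maximal subgroup of $Z(G)$ (i.e. of index $2$). Every maximal subgroup of $Z(G)$ is of the form $[x,G]$ for some $x\in G\setminus Z(G)$, and for $x,x'\in G\setminus Z(G)$ we have $[x,G]=[x',G]$ if and only if $xZ(G)=x'Z(G)$.
   Context: Let $n=2m+1$ be odd, $\mathbb{F}_{2^n}$ the field with $2^n$ elements, $\theta$ a generator of $\mathrm{Gal}(\mathbb{F}_{2^n}/\mathbb{F}_2)$, $a^\theta$ the image of $a$ under $\theta$. $G=A(n,\theta)$ is the group of matrices $\begin{bmatrix}1&a&b\\0&1&a^\theta\\0&0&1\end{bmatrix}$, $a,b\in\mathbb{F}_{2^n}$, denoted $(a,b)$, with $(a,b)(c,d)=(a+c,\,b+d+ac^\theta)$. $Z(G)$ is the center of $G$ (an elementary abelian $2$-group of order $2^n$). *)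

(* Defs.v *)
From HB Require Import structures.
From mathcomp Require Import all_boot all_order all_algebra all_fingroup all_solvable.
From mathcomp Require Import ring.
Set Implicit Arguments. Unset Strict Implicit. Unset Printing Implicit Defensive.
Import GRing.Theory.

(* theta generates Gal(F/F_2): every field automorphism of F (= every ring
   endomorphism of the finite field F, all of which fix the prime field F_2)
   is a power of theta. *)
Definition gal_generator (F : finFieldType) (th : {rmorphism F -> F}) : Prop :=
  forall sigma : {rmorphism F -> F}, exists k : nat, forall x, sigma x = iter k th x.

(* The element (a,b) stands for the matrix [[1,a,b],[0,1,a^th],[0,0,1]];
   the type depends on th so that the group law can. *)
Definition Agrp (F : finFieldType) (th : {rmorphism F -> F}) : Type := (F * F)%type.

Section AGroup.
Variables (F : finFieldType) (th : {rmorphism F -> F}).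
Local Open Scope ring_scope.

Local Notation Agrp := (Agrp th).
HB.instance Definition _ := Finite.on Agrp.

Definition Amul (x y : Agrp) : Agrp := (x.1 + y.1, x.2 + y.2 + x.1 * th y.1).
Definition Aone : Agrp := (0, 0).
Definition Ainv (x : Agrp) : Agrp := (- x.1, - x.2 + x.1 * th x.1).

Lemma AmulA : associative Amul.
Proof.
move=> [a b] [c d] [e f]; rewrite /Amul /=; congr (_, _); first by rewrite addrA.
by rewrite rmorphD /= mulrDl mulrDr; ring.
Qed.

Lemma Amul1 : left_id Aone Amul.
Proof. by move=> [a b]; rewrite /Amul /= !add0r mul0r addr0. Qed.

Lemma AmulV : left_inverse Aone Ainv Amul.
Proof.
move=> [a b]; rewrite /Amul /Ainv /=; congr (_, _); first by rewrite addNr.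
by rewrite mulNr; ring.
Qed.

HB.instance Definition _ := Finite_isGroup.Build Agrp AmulA Amul1 AmulV.

End AGroup.

Definition commx (F : finFieldType) (th : {rmorphism F -> F}) (x : Agrp th)
  : {set Agrp th} :=
  <<[set [~ x, g] | g in [set: Agrp th]]>>%g.

(* Main.v *)
Require Import Defs.
From HB Require Import structures.
From mathcomp Require Import all_boot all_order all_algebra all_fingroup all_solvable all_field all_character.
From mathcomp Require Import ring zify.
Set Implicit Arguments. Unset Strict Implicit. Unset Printing Implicit Defensive.
Import GRing.Theory.

Lemma index2_mul (gT' : finGroupType) (G H : {group gT'}) y z :
  H \subset G -> #|G : H|%g = 2 -> y \in G -> z \in G -> y \notin H -> z \notin H ->
  (z * y^-1)%g \in H.
Proof.
move=> sHG iG yG zG yH zH.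
rewrite -mem_rcoset.
have Hy : (H :* y)%g != H.
  apply: contraNneq yH => <-; exact: rcoset_refl.
have Hz : (H :* z)%g != H.
  apply: contraNneq zH => <-; exact: rcoset_refl.
apply: contraT => zHy.
have Hzy : (H :* z)%g != (H :* y)%g.
  by apply: contraNneq zHy => <-; exact: rcoset_refl.
have sub : ((H : {set gT'}) |: [set H :* y; H :* z])%g \subset rcosets H G.
  apply/subsetP => K; rewrite !inE => /or3P[] /eqP ->.
  - by apply/rcosetsP; exists 1%g; rewrite ?group1 ?rcoset1.
  - by apply/rcosetsP; exists y.
  - by apply/rcosetsP; exists z.
have := subset_leq_card sub.
rewrite -/(indexg G H) iG cardsU1 cards2 !inE eq_sym (negbTE Hy) eq_sym (negbTE Hz).
by rewrite eq_sym Hzy.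
Qed.

Section S.
Variables (F : finFieldType) (th : {rmorphism F -> F}).
Local Notation gT := (Agrp th).
Local Open Scope ring_scope.

Hypothesis fix01 : forall t : F, th t = t -> t = 0 \/ t = 1.
Hypothesis nontriv : exists t : F, th t != t.

Lemma mulE (x y : gT) : (x * y)%g = (x.1 + y.1, x.2 + y.2 + x.1 * th y.1).
Proof. by []. Qed.
Lemma invE (x : gT) : (x^-1)%g = (- x.1, - x.2 + x.1 * th x.1).
Proof. by []. Qed.
Lemma oneE : (1 : gT)%g = (0, 0).
Proof. by []. Qed.

Definition fc (a c : F) := a * th c - c * th a.

Lemma commE (x g : gT) : [~ x, g]%g = (0, fc x.1 g.1).
Proof.
case: x g => [a b] [c d].
rewrite /commg /conjg !mulE !invE /fc /=.
rewrite !rmorphD !rmorphN /=.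
congr (_, _); ring.
Qed.

Lemma fcD a c c' : fc a (c + c') = fc a c + fc a c'.
Proof. rewrite /fc rmorphD /=; ring. Qed.

Lemma fc_at a t : fc a (a * t) = a * th a * (th t - t).
Proof. rewrite /fc rmorphM /=; ring. Qed.

Lemma fc_eq0 a c : a != 0 -> (fc a c == 0) = (c \in [set 0; a]).
Proof.
move=> a0; have -> : c = a * (c / a) by rewrite mulrC divfK.
move: (c / a) => t.
rewrite fc_at !inE !mulf_eq0 (negbTE a0) fmorph_eq0 (negbTE a0) /= subr_eq0.
apply/eqP/orP => [/fix01 [->|->]|[/eqP|/eqP]].
- by left.
- by right; rewrite mulr1.
- by move=> ->; rewrite rmorph0.
- by rewrite -{2}[a]mulr1 => /(mulfI a0) ->; rewrite rmorph1.
Qed.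

Definition Zs : {set gT} := [set y : gT | y.1 == 0].

Lemma centerE : ('Z([set: gT]))%g = Zs.
Proof.
apply/setP => y; rewrite [in RHS]inE; apply/centerP/idP.
  case=> _ cy; apply: contraT => a0.
  case: nontriv => t tt.
  have /commgP := cy ((y.1 * t, 0) : gT) (in_setT _).
  rewrite commE /= fc_at oneE => /eqP [] /eqP.
  by rewrite !mulf_eq0 (negbTE a0) fmorph_eq0 (negbTE a0) subr_eq0 (negbTE tt).
move=> /eqP y0; split; first exact: in_setT.
by move=> g _; apply/commgP; rewrite commE y0 /fc rmorph0 oneE mul0r mulr0 subrr.
Qed.

Definition CS (a : F) : {set gT} := [set y : gT | (y.1 == 0) && [exists c, y.2 == fc a c]].

Lemma CS_group a : group_set (CS a).
Proof.
apply/group_setP; split.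
  rewrite inE oneE /= eqxx /=; apply/existsP; exists 0.
  by rewrite /fc rmorph0 mulr0 mul0r subrr.
move=> y z; rewrite !inE => /andP[/eqP y1 /existsP[c /eqP yc]] /andP[/eqP z1 /existsP[d /eqP zd]].
rewrite mulE /= y1 z1 add0r eqxx /=; apply/existsP; exists (c + d).
by rewrite fcD yc zd mul0r addr0.
Qed.

Lemma commx_imset (x : gT) : [set [~ x, g] | g in [set: gT]]%g = CS x.1.
Proof.
apply/setP => y; rewrite inE; apply/imsetP/andP.
  case=> g _ ->; rewrite commE /=; split=> //; apply/existsP; by exists g.1.
case=> /eqP y1 /existsP [c /eqP y2]; exists ((c, 0) : gT); first by [].
by rewrite commE; case: y y1 y2 => ? ? /= -> ->.
Qed.

Lemma commxE (x : gT) : commx x = CS x.1.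
Proof. by rewrite /commx commx_imset gen_set_id // CS_group. Qed.

Lemma cxM (x : gT) : {in [set: gT] &, {morph (fun g => [~ x, g]%g) : g h / (g * h)%g}}.
Proof. by move=> g h _ _ /=; rewrite !commE fcD mulE /= mul0r !addr0. Qed.

Definition cxm x : {morphism [set: gT] >-> gT} := Morphism (cxM x).

Lemma card_fst (A : {set F}) : #|[set g : gT | g.1 \in A]| = (#|A| * #|F|)%N.
Proof.
rewrite -[#|F|]cardsT -cardsX; apply: eq_card => g; rewrite !inE andbT //.
Qed.

Lemma card_gT : #|[set: gT]| = (#|F| * #|F|)%N.
Proof. by rewrite cardsT card_prod. Qed.

Lemma card_CS a : a != 0 -> (#|CS a| * 2)%N = #|F|.
Proof.
move=> a0; pose x : gT := (a, 0).
have -> : CS a = (cxm x @* [set: gT])%g.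
  by rewrite morphimEdom -(commx_imset x).
rewrite card_morphim setIid.
have kerE : ('ker (cxm x))%g = [set g : gT | g.1 \in [set 0; a]].
  apply/setP => g; rewrite !inE /= commE oneE /= -in_set2 -(fc_eq0 _ a0).
  by rewrite xpair_eqE eqxx.
have h := Lagrange (subsetT ('ker (cxm x))%g).
have hk : #|('ker (cxm x))%g| = (2 * #|F|)%N.
  by rewrite kerE card_fst cards2 eq_sym (negbTE a0).
rewrite hk card_gT in h.
have F0 : (0 < #|F|)%N by apply/card_gt0P; exists 0.
apply/eqP; rewrite -(eqn_pmul2l F0); apply/eqP.
rewrite -h; set k := indexg _ _; lia.
Qed.

Lemma card_Zs : #|Zs| = #|F|.
Proof.
rewrite -[#|F|]mul1n -(cards1 (0 : F)) -card_fst; apply: eq_card => g.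
by rewrite !inE.
Qed.

Lemma commx_sub (x : gT) : commx x \subset ('Z([set: gT]))%g.
Proof.
rewrite commxE; move: centerE => ->. by apply/subsetP => y; rewrite !inE => /andP[->].
Qed.

Lemma commx_index (x : gT) : x.1 != 0 -> #|('Z([set: gT]))%g : commx x|%g = 2.
Proof.
move=> a0.
have h : (#|commx x| * #|'Z([set: gT]) : commx x|%g)%N = #|('Z([set: gT]))%g|
  := Lagrange (commx_sub x).
have cE := centerE.
rewrite cE card_Zs -(card_CS a0) -commxE in h.
have c0 : (0 < #|commx x|)%N.
  have F0 : (0 < #|F|)%N by apply/card_gt0P; exists 0.
  by move: F0; rewrite -(card_CS a0) -commxE muln_gt0 => /andP[].
by apply/eqP; rewrite -(eqn_pmul2l c0) cE h.
Qed.


Definition P1b (p : F) := [exists t, p == th t - t].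

Lemma fc1 c : fc 1 c = th c - c.
Proof. by rewrite /fc rmorph1 mul1r mulr1. Qed.

Lemma P1B p q : P1b p -> P1b q -> P1b (p - q).
Proof.
move=> /existsP[t /eqP->] /existsP[s /eqP->]; apply/existsP; exists (t - s).
by rewrite rmorphB; apply/eqP; ring.
Qed.

Lemma memCS1 b : (((0, b) : gT) \in CS 1) = P1b b.
Proof. by rewrite inE /= eqxx /=; apply: eq_existsb => c; rewrite fc1. Qed.

Definition x1 : gT := (1, 0).
Definition Hg := (<<[set [~ x1, g]%g | g in [set: gT]]>>)%G.

Lemma HgE : (Hg : {set gT}) = CS 1.
Proof. exact: (commxE x1). Qed.

Lemma Hg_sub : Hg \subset ('Z([set: gT]))%G.
Proof. exact: (commx_sub x1). Qed.

Lemma Hg_index : #|('Z([set: gT]))%G : Hg|%g = 2.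
Proof. exact: (commx_index (x := x1) (oner_neq0 F)). Qed.

Lemma memZ (y : gT) : (y \in ('Z([set: gT]))%g) = (y.1 == 0).
Proof. by move: centerE => ->; rewrite inE. Qed.

Lemma P1_out : exists y, ~~ P1b y.
Proof.
have : ~~ (('Z([set: gT]))%G \subset Hg).
  apply/negP => sZH.
  have e : Hg = ('Z([set: gT]))%G by apply/val_inj/eqP; rewrite eqEsubset Hg_sub sZH.
  by have := Hg_index; rewrite e indexgg.
case/subsetPn => y; rewrite memZ HgE => /eqP y0 ny.
exists y.2; rewrite -memCS1; case: y y0 ny => ? ? /= ->; done.
Qed.

Lemma P1_idx2 y z : ~~ P1b y -> ~~ P1b z -> P1b (z - y).
Proof.
move=> ny nz.
have := index2_mul (y := ((0, y) : gT)) (z := ((0, z) : gT)) Hg_sub Hg_index.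
rewrite !memZ /= !HgE !memCS1 eqxx => /(_ isT isT ny nz).
have -> : (((0, z) : gT) * ((0, y) : gT)^-1)%g = ((0, z - y) : gT).
  by rewrite mulE invE /= oppr0 !mul0r !addr0.
by rewrite memCS1.
Qed.

Lemma lam1 (l : F) : l != 0 -> (forall p, P1b p -> P1b (l * p)) ->
  (forall p, P1b p -> P1b (l^-1 * p)) -> l = 1.
Proof.
move=> l0 h1 h2; apply/eqP; apply: contraT => l1.
pose mu := l - 1.
have mu0 : mu != 0 by rewrite subr_eq0.
have hmu p : P1b p -> P1b (mu * p).
  by move=> Pp; rewrite /mu mulrBl mul1r; apply: P1B => //; apply: h1.
have hmuX m p : P1b p -> P1b (mu ^+ m * p).
  elim: m => [|m IH] Pp; first by rewrite expr0 mul1r.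
  by rewrite exprS -mulrA; apply: hmu; apply: IH.
have [y ny] := P1_out.
have nly : ~~ P1b (l * y) by apply: contra ny => /h2; rewrite mulKf.
have := P1_idx2 ny nly; rewrite -{2}[y]mul1r -mulrBl -/mu => Pmy.
have F2 : (1 < #|F|)%N by exact: finNzRing_gt1.
have mu1 : mu ^+ #|F|.-1 = 1.
  apply: (mulIf mu0); rewrite mul1r -exprSr prednK ?expf_card //; lia.
have : P1b (mu ^+ #|F|.-2 * (mu * y)) by apply: hmuX.
rewrite mulrA -exprSr.
have -> : (#|F|.-2).+1 = #|F|.-1 by lia.
by rewrite mu1 mul1r (negbTE ny).
Qed.

Hypothesis frob : forall u : F, th (th u) = u -> u ^+ 2 = u \/ u ^+ 2 = th u.
Hypothesis cube1 : forall u : F, u ^+ 3 = 1 -> u = 1.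

Lemma N_inj a a' : a' != 0 -> a * th a = a' * th a' -> a = a'.
Proof.
move=> a'0 e.
have Na'0 : a' * th a' != 0 by rewrite mulf_eq0 fmorph_eq0 (negbTE a'0).
pose u := a / a'.
have u1 : u * th u = 1.
  rewrite /u rmorphM fmorphV /= mulrACA -invfM e divff //.
have u0 : u != 0 by apply/eqP => u00; move: u1; rewrite u00 mul0r => /eqP; rewrite eq_sym oner_eq0.
have thu : th u = u^-1 by rewrite -[th u]mul1r -(mulVf u0) -mulrA u1 mulr1.
have thth : th (th u) = u by rewrite thu fmorphV /= thu invrK.
have uu : u = 1.
  case: (frob thth) => h.
    by apply: (mulIf u0); rewrite mul1r -expr2 h.
  apply: cube1; rewrite exprS h thu mulfV //.
exact: divr1_eq uu.
Qed.

Lemma CS_step a a' : a != 0 -> a' != 0 -> CS a \subset CS a' ->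
  forall p, P1b p -> P1b (a * th a / (a' * th a') * p).
Proof.
move=> a0 a'0 sub p; case/existsP => t /eqP ->.
have : ((0, fc a (a * t)) : gT) \in CS a.
  by rewrite inE /= eqxx /=; apply/existsP; exists (a * t).
move/(subsetP sub); rewrite inE /= => /andP[_ /existsP[c /eqP]].
have -> : c = a' * (c / a') by rewrite mulrC divfK.
rewrite !fc_at => e.
have Na'0 : a' * th a' != 0 by rewrite mulf_eq0 fmorph_eq0 (negbTE a'0).
apply/existsP; exists (c / a'); apply/eqP.
by rewrite mulrAC e mulrAC divff // mul1r.
Qed.

Lemma CS_inj a a' : a != 0 -> a' != 0 -> CS a = CS a' -> a = a'.
Proof.
move=> a0 a'0 e.
have Na'0 : a' * th a' != 0 by rewrite mulf_eq0 fmorph_eq0 (negbTE a'0).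
have Na0 : a * th a != 0 by rewrite mulf_eq0 fmorph_eq0 (negbTE a0).
have l0 : a * th a / (a' * th a') != 0 by rewrite mulf_eq0 invr_eq0 negb_or Na0.
have s1 : CS a \subset CS a' by rewrite e.
have s2 : CS a' \subset CS a by rewrite e.
have := lam1 l0 (CS_step a0 a'0 s1).
rewrite invf_div => /(_ (CS_step a'0 a0 s2)) /divr1_eq.
by apply: N_inj.
Qed.

End S.
Section Chars.
Local Open Scope ring_scope.
Lemma max_ker (gT : finGroupType) (Z M : {group gT}) : abelian Z -> maximal M Z ->
  exists2 i : Iirr Z, i != 0 & cfker 'chi_i = M.
Proof.
move=> aZ maxM.
have [prM maxM'] := maxgroupP maxM.
have sMZ : M \subset Z by exact: proper_sub.
have nMZ : (M <| Z)%g by rewrite -sub_abelian_normal.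
case: (boolP [exists i : Iirr Z, (i != 0) && (cfker 'chi_i == M)]).
  by case/existsP => i /andP[i0 /eqP e]; exists i.
rewrite negb_exists => /forallP none; exfalso.
have allZ i : M \subset cfker 'chi[Z]_i -> cfker 'chi[Z]_i = Z.
  move=> sMk; case: (eqVneq (cfker 'chi[Z]_i) (Z : {set gT})) => // ne.
  have pr : (cfker 'chi[Z]_i)%G \proper Z by rewrite properEneq ne cfker_sub.
  have e := maxM' _ pr sMk.
  have i0 : i != 0.
    by apply: contra_neq ne => ->; rewrite cfker_irr0.
  have := none i; rewrite i0 /=.
  by rewrite -e eqxx.
have := cap_cfker_normal nMZ.
have -> : \bigcap_(i | M \subset cfker 'chi[Z]_i) cfker 'chi[Z]_i = Z.
  apply/eqP; rewrite eqEsubset; apply/andP; split.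
    by rewrite (bigcap_min 0) ?cfker_irr0 //.
  by apply/bigcapsP => i /allZ ->.
by move=> eZM; move: prM; rewrite eZM properxx.
Qed.

Lemma card_max (gT : finGroupType) (Z : {group gT}) : abelian Z ->
  (#|[set M : {group gT} | maximal M Z]| <= #|Z|.-1)%N.
Proof.
move=> aZ.
rewrite -(card_Iirr_abelian aZ) -(cardsC1 (0 : Iirr Z)).
apply: leq_trans (leq_imset_card (fun i : Iirr Z => [group of cfker 'chi[Z]_i]) [set~ 0]).
apply: subset_leq_card; apply/subsetP => M; rewrite inE => maxM.
have [i i0 e] := max_ker aZ maxM.
apply/imsetP; exists i; first by rewrite !inE.
by apply/val_inj; rewrite /= e.
Qed.

End Chars.


Section Main.
Variables (F : finFieldType) (th : {rmorphism F -> F}).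
Local Notation gT := (Agrp th).
Local Open Scope ring_scope.
Hypothesis fix01 : forall t : F, th t = t -> t = 0 \/ t = 1.
Hypothesis nontriv : exists t : F, th t != t.
Hypothesis frob : forall u : F, th (th u) = u -> u ^+ 2 = u \/ u ^+ 2 = th u.
Hypothesis cube1 : forall u : F, u ^+ 3 = 1 -> u = 1.

Lemma notZ (x : gT) : (x \in [set: gT] :\: 'Z([set: gT]))%g = (x.1 != 0).
Proof. by rewrite in_setD (memZ nontriv) in_setT andbT. Qed.

Lemma part1 (x : gT) : x \in ([set: gT] :\: 'Z([set: gT]))%g ->
  maximal (commx x) ('Z([set: gT]))%g /\ #|'Z([set: gT]) : commx x|%g = 2.
Proof.
rewrite notZ => a0.
have i2 := commx_index fix01 nontriv a0.
split=> //.
apply: (p_index_maximal (M := (<<[set [~ x, g]%g | g in [set: gT]]>>)%G)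
          (P := ('Z([set: gT]))%G) (commx_sub nontriv x)).
by rewrite i2.
Qed.

Definition cg (a : F) : {group gT} := (<<[set [~ ((a, 0) : gT), g]%g | g in [set: gT]]>>)%G.

Lemma cgE a : (cg a : {set gT}) = CS th a.
Proof. exact: (commxE ((a, 0) : gT)). Qed.

Lemma part2 (M : {group gT}) : maximal M ('Z([set: gT]))%g ->
  exists2 x : gT, x \in ([set: gT] :\: 'Z([set: gT]))%g & commx x = M.
Proof.
move=> maxM.
pose I := [set cg a | a in [set~ (0 : F)]].
pose Ms := [set M : {group gT} | maximal M ('Z([set: gT]))%G].
have sIM : I \subset Ms.
  apply/subsetP => K /imsetP[a]; rewrite !inE => a0 ->.
  have := part1 (x := ((a, 0) : gT)); rewrite notZ => /(_ a0) [mx _].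
  exact: mx.
have cI : #|I| = #|F|.-1.
  rewrite card_in_imset ?cardsC1 // => a a'; rewrite !inE => a0 a'0 e.
  apply: (CS_inj fix01 nontriv frob cube1 a0 a'0).
  by rewrite -!cgE e.
have cM : (#|Ms| <= #|F|.-1)%N.
  have h : (#|Ms| <= #|('Z([set: gT]))%G|.-1)%N := card_max (center_abelian _).
  have cZ : #|('Z([set: gT]))%G| = #|F|.
    by move: (centerE nontriv) => /= ->; rewrite card_Zs.
  by rewrite cZ in h.
have eIM : I = Ms by apply/eqP; rewrite eqEcard sIM cI.
have : M \in Ms by rewrite inE.
rewrite -eIM => /imsetP[a]; rewrite !inE => a0 ->.
by exists ((a, 0) : gT); rewrite ?notZ.
Qed.

Lemma part3 (x x' : gT) :
  x \in ([set: gT] :\: 'Z([set: gT]))%g -> x' \in ([set: gT] :\: 'Z([set: gT]))%g ->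
  (commx x = commx x' <-> (x *: 'Z([set: gT]))%g = (x' *: 'Z([set: gT]))%g).
Proof.
rewrite !notZ => a0 a'0.
have -> : (commx x = commx x') <-> x.1 = x'.1.
  rewrite !commxE; split; first by move=> e; apply: (CS_inj fix01 nontriv frob cube1 a0 a'0 e).
  by move=> ->.
split.
  move=> e; apply/lcoset_eqP; rewrite mem_lcoset (memZ nontriv) invE mulE /= e.
  by rewrite addNr.
move/lcoset_eqP; rewrite mem_lcoset (memZ nontriv) invE mulE /= addrC subr_eq0.
by move/eqP.
Qed.
End Main.

Lemma pow2_mod3 m : (2 ^ (m.*2.+1) %% 3 = 2)%N.
Proof.
elim: m => [|m IH] //.
by rewrite doubleS !expnS mulnA -modnMm -expnS IH.
Qed.

Theorem lemma3p1 (F : finFieldType) (n : nat) (th : {rmorphism F -> F}) :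
  odd n -> 3 <= n -> #|F| = 2 ^ n -> gal_generator th ->
  [/\ (forall x : Agrp th, x \in [set: Agrp th] :\: 'Z([set: Agrp th]) ->
         maximal (commx x) 'Z([set: Agrp th])
         /\ #|'Z([set: Agrp th]) : commx x| = 2),
      (forall M : {group Agrp th}, maximal M 'Z([set: Agrp th]) ->
         exists2 x : Agrp th, x \in [set: Agrp th] :\: 'Z([set: Agrp th])
                   & commx x = M)
    & (forall x x' : Agrp th,
         x \in [set: Agrp th] :\: 'Z([set: Agrp th]) ->
         x' \in [set: Agrp th] :\: 'Z([set: Agrp th]) ->
         (commx x = commx x' <-> x *: 'Z([set: Agrp th]) = x' *: 'Z([set: Agrp th])))]%g.
Proof.
move=> on n3 cF gth.
have ch : (2 \in [pchar F])%R by apply: (card_finPcharP cF).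
have [k hk] := gth (pFrobenius_aut ch).
have sq t : (t ^+ 2 = iter k th t)%R by rewrite -hk.
have fix01 : forall t : F, th t = t -> t = 0%R \/ t = 1%R.
  move=> t tt.
  have it : iter k th t = t by elim: (k) => //= j ->.
  have : (t * (t - 1) == 0)%R by rewrite mulrBr mulr1 -expr2 sq it subrr.
  rewrite mulf_eq0 subr_eq0 => /orP[] /eqP; by [left | right].
have nontriv : exists t : F, th t != t.
  case: (boolP [exists t : F, th t != t]) => [/existsP //|].
  rewrite negb_exists => /forallP allfix.
  have : (#|F| <= 2)%N.
    have <- : #|[set (0 : F)%R; 1%R]| = 2.
      by rewrite cards2 eq_sym oner_neq0.
    rewrite -cardsT; apply: subset_leq_card; apply/subsetP => t _.
    have := allfix t; rewrite negbK => /eqP /fix01 [] ->; by rewrite !inE eqxx ?orbT.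
  rewrite cF.
  have -> : n = (n - 3) + 3 by rewrite subnK.
  rewrite expnD => h; have p := expn_gt0 2 (n - 3); move: h p.
  have -> : (2 ^ 3 = 8)%N by []. set m := (2 ^ (n - 3))%N; lia.
have frob : forall u : F, th (th u) = u -> (u ^+ 2 = u \/ u ^+ 2 = th u)%R.
  move=> u thth; rewrite sq.
  elim: (k) => [|j IH] /=; first by left.
  by case: IH => ->; [right | left].
have cube1 : forall u : F, (u ^+ 3 = 1 -> u = 1)%R.
  move=> u u3.
  have u0 : (u != 0)%R by apply: contra_eq_neq u3 => ->; rewrite expr0n /= eq_sym oner_neq0.
  have e : (u ^+ 2 = u)%R.
    rewrite -[X in (_ = X)%R](expf_card u) cF.
    by rewrite -[in RHS](expr_mod _ u3) -[n]odd_double_half on add1n pow2_mod3.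
  by apply: (mulIf u0); rewrite mul1r -expr2 e.
split.
- by move=> x /(part1 fix01 nontriv).
- by move=> M /(part2 fix01 nontriv frob cube1).
- by move=> x x' hx hx'; apply: (part3 fix01 nontriv frob cube1 hx hx').
Qed.
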